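(* Let $h$ be a penalty function on the simplex $\Delta=\Delta(\{1,\dots,n\})\subset\mathbb{R}^n$ and let $Q(y)=\arg\max_{x\in\Delta}\{\langle y,x\rangle-h(x)\}$, $y\in\mathbb{R}^n$, be its induced choice map. Then: (i) $Q(y')=Q(y)$ for all $y,y'\in\mathbb{R}^n$ with $y'-y$ proportional to $(1,\dots,1)$; (ii) $Q(y-te_\beta)=Q(y)$ for all $t\ge0$ and all $y\in\mathbb{R}^n$ such that $Q_\beta(y)=0$; (iii) for every sequence $y_j\in\mathbb{R}^n$ with $y_{j,\alpha}-y_{j,\beta}\to-\infty$ for some $\beta\ne\alpha$, $Q_\alpha(y_j)\to0$.
   Context: A penalty function on $\Delta$ is $h:\Delta\to\mathbb{R}$ that is continuous, $C^\infty$ on the relative interior of every face of $\Delta$, and strongly convex: for some $K>0$ and norm $\|\cdot\|$, $h(tx_1+(1-t)x_2)\le th(x_1)+(1-t)h(x_2)-\tfrac12Kt(1-t)\|x_1-x_2\|^2$ for all $x_1,x_2\in\Delta$, $t\in[0,1]$. $e_\beta$ denotes the $\beta$-th standard basis vector. *)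

(* Defs.v *)
From HB Require Import structures.
From mathcomp Require Import all_boot all_order all_algebra.
From mathcomp Require Import all_classical all_reals all_analysis.
Set Implicit Arguments. Unset Strict Implicit. Unset Printing Implicit Defensive.
Import Order.TTheory GRing.Theory Num.Theory.
Import numFieldNormedType.Exports.
Local Open Scope classical_set_scope.
Local Open Scope ring_scope.

(* Points of R^n are row vectors 'rV[R]_n; coordinate alpha of x is x ord0 alpha. *)

Definition simplex (R : realType) (n : nat) : set 'rV[R]_n :=
  [set x | (forall i, 0 <= x ord0 i) /\ \sum_i x ord0 i = 1].

Arguments simplex {R n}.

Definition inner (R : realType) (n : nat) (y x : 'rV[R]_n) : R :=
  \sum_i y ord0 i * x ord0 i.

Definition ebasis (R : realType) (n : nat) (b : 'I_n) : 'rV[R]_n :=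
  \row_i (i == b)%:R.

Definition ones (R : realType) (n : nat) : 'rV[R]_n := const_mx 1.

Arguments ones {R n}.
Arguments ebasis {R n}.

Definition is_norm (R : realType) (n : nat) (N : 'rV[R]_n -> R) : Prop :=
  (forall x, N x = 0 -> x = 0) /\
  (forall (a : R) x, N (a *: x) = `|a| * N x) /\
  (forall x y, N (x + y) <= N x + N y).

Definition face_relint (R : realType) (n : nat) (S : {set 'I_n}) : set 'rV[R]_n :=
  [set x | simplex x /\ (forall i, i \in S -> 0 < x ord0 i)
                            /\ (forall i, i \notin S -> x ord0 i = 0)].

Arguments face_relint {R n}.

Definition face_dir (R : realType) (n : nat) (S : {set 'I_n}) : set 'rV[R]_n :=
  [set v | \sum_i v ord0 i = 0 /\ (forall i, i \notin S -> v ord0 i = 0)].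

Arguments face_dir {R n}.

Fixpoint iter_dderiv (R : realType) (n : nat) (f : 'rV[R]_n -> R)
    (vs : seq 'rV[R]_n) : 'rV[R]_n -> R :=
  match vs with
  | [::] => f
  | v :: vs' => fun x => 'D_v (iter_dderiv f vs') x
  end.

Definition smooth_on (R : realType) (n : nat) (f : 'rV[R]_n -> R)
    (U V : set 'rV[R]_n) : Prop :=
  forall vs : seq 'rV[R]_n, (forall v, v \in vs -> V v) ->
    {within U, continuous (iter_dderiv f vs)} /\
    (forall v, V v -> forall x, U x -> derivable (iter_dderiv f vs) x v).

Definition penalty (R : realType) (n : nat) (h : 'rV[R]_n -> R) : Prop :=
  {within simplex, continuous h} /\
  (forall S : {set 'I_n}, S != finset.set0 ->
     smooth_on h (face_relint S) (face_dir S)) /\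
  (exists (K : R) (N : 'rV[R]_n -> R), 0 < K /\ is_norm N /\
     forall x1 x2, simplex x1 -> simplex x2 ->
     forall t : R, 0 <= t <= 1 ->
       h (t *: x1 + (1 - t) *: x2) <=
         t * h x1 + (1 - t) * h x2 - 2^-1 * K * t * (1 - t) * (N (x1 - x2)) ^+ 2).

Definition is_argmax (R : realType) (n : nat) (h : 'rV[R]_n -> R)
    (y x : 'rV[R]_n) : Prop :=
  simplex x /\
  forall x', simplex x' -> inner y x' - h x' <= inner y x - h x.

(* The induced choice map Q(y) = argmax_{x in Delta} {<y,x> - h(x)}
   (the maximizer, which exists and is unique for a penalty function). *)
Definition choice_map (R : realType) (n : nat) (h : 'rV[R]_n -> R)
    (y : 'rV[R]_n) : 'rV[R]_n :=
  xget 0 [set x | is_argmax h y x].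

(* Main.v *)
Require Import Defs.
From HB Require Import structures.
From mathcomp Require Import all_boot all_order all_algebra.
From mathcomp Require Import all_classical all_reals all_analysis.
From mathcomp Require Import ring lra.
Import Order.TTheory GRing.Theory Num.Theory.
Import numFieldNormedType.Exports.
Local Open Scope classical_set_scope.
Local Open Scope ring_scope.
Section H.
Variables (R : realType) (n : nat).
Implicit Types (x y u v : 'rV[R]_n).

Lemma innerD y u v : inner y (u + v) = inner y u + inner y v.
Proof.
rewrite /inner -big_split /=; apply: eq_bigr => i _; by rewrite !mxE mulrDr.
Qed.

Lemma innerZ y a u : inner y (a *: u) = a * inner y u.
Proof.
rewrite /inner mulr_sumr; apply: eq_bigr => i _; by rewrite !mxE mulrCA.
Qed.

Lemma innerDl y y' u : inner (y + y') u = inner y u + inner y' u.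
Proof.
rewrite /inner -big_split /=; apply: eq_bigr => i _; by rewrite !mxE mulrDl.
Qed.

Lemma innerZl a y u : inner (a *: y) u = a * inner y u.
Proof.
rewrite /inner mulr_sumr; apply: eq_bigr => i _; by rewrite !mxE mulrA.
Qed.

Lemma innerNl y u : inner (- y) u = - inner y u.
Proof.
rewrite /inner -sumrN; apply: eq_bigr => i _; by rewrite !mxE mulNr.
Qed.

Lemma inner_ones u : simplex u -> inner ones u = 1.
Proof.
move=> [_ s1]; rewrite /inner -s1; apply: eq_bigr => i _; by rewrite !mxE mul1r.
Qed.

Lemma inner_ebasis b u : inner (ebasis b) u = u ord0 b.
Proof.
rewrite /inner (bigD1 b) //= big1 ?addr0; first by rewrite !mxE eqxx mul1r.
by move=> i ib; rewrite !mxE (negbTE ib) mul0r.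
Qed.

Lemma simplex_conv x1 x2 t : simplex x1 -> simplex x2 -> 0 <= t <= 1 ->
  simplex (t *: x1 + (1 - t) *: x2).
Proof.
move=> [p1 s1] [p2 s2] /andP[t0 t1]; split.
  move=> i; rewrite !mxE; apply: addr_ge0; apply: mulr_ge0 => //.
  by rewrite subr_ge0.
have -> : \sum_i (t *: x1 + (1 - t) *: x2) ord0 i =
   t * \sum_i x1 ord0 i + (1 - t) * \sum_i x2 ord0 i.
  rewrite !mulr_sumr -big_split; apply: eq_bigr => i _; by rewrite !mxE.
by rewrite s1 s2 !mulr1 addrC subrK.
Qed.

Lemma sum_cont (T : topologicalType) (F : 'I_n -> T -> R) :
  (forall i, continuous (F i)) -> continuous (fun z : T => \sum_i F i z).
Proof.
move=> cF.
have -> : (fun z : T => \sum_i F i z) = \sum_i F i by apply/funext=> z; rewrite fct_sumE.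
apply: (big_ind (fun f : T -> R => continuous f)).
- exact: cst_continuous.
- by move=> f g cf cg z; exact: (@continuousD R R^o T f g z (cf z) (cg z)).
- by move=> i _; apply: cF.
Qed.

Lemma inner_cont y : continuous (inner y).
Proof.
apply: (@sum_cont _ (fun i x => y ord0 i * x ord0 i)) => i x.
apply: continuousM; first exact: cst_continuous.
exact: (@coord_continuous R 1 n ord0 i).
Qed.

Lemma simplex_closed : closed (@simplex R n).
Proof.
have -> : @simplex R n = (\bigcap_(i in [set: 'I_n]) [set x : 'rV[R]_n | 0 <= x ord0 i])
   `&` ((fun x : 'rV[R]_n => \sum_i x ord0 i) @^-1` [set 1]).
  rewrite predeqE => x; split => [[p s]|[p s]]; split => //=.
    by move=> i _; apply: p.
  by move=> i; apply: p.
apply: closedI.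
  apply: closed_bigI => i _.
  have := (continuous_closedP _).1 (@coord_continuous R 1 n ord0 i) _ (@closed_ge R 0).
  by [].
apply: (continuous_closedP _).1; last exact: closed_eq.
apply: (@sum_cont _ (fun i x => x ord0 i)) => i.
exact: (@coord_continuous R 1 n ord0 i).
Qed.

Lemma simplex_compact : compact (@simplex R n).
Proof.
apply: (subclosed_compact simplex_closed
   (@rV_compact _ n (fun=> `[(0:R), 1]%classic) (fun _ => @segment_compact R 0 1))).
move=> x [p s] i /=; rewrite in_itv /= p /=.
rewrite -s (bigD1 i) //= lerDl; apply: sumr_ge0 => j _; exact: p.
Qed.


Lemma simplex_ebasis b : simplex (@ebasis R n b).
Proof.
split; first by move=> i; rewrite !mxE ler0n.
rewrite (bigD1 b) //= big1 ?addr0; first by rewrite !mxE eqxx.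
by move=> i ib; rewrite !mxE (negbTE ib).
Qed.

Lemma argmax_exists (h : 'rV[R]_n -> R) y : {within simplex, continuous h} ->
  (0 < n)%N -> exists x, is_argmax h y x.
Proof.
move=> ch n0.
have cf : {within simplex, continuous (fun x => inner y x - h x)}.
  move=> z; apply: (@continuousD R R^o).
    exact: (continuous_subspaceT (inner_cont y)).
  by apply: (@continuousN R R^o); exact: ch.
have ne : (@simplex R n) !=set0 by exists (ebasis (Ordinal n0)); exact: simplex_ebasis.
have [c cA cmax] := EVT_max_rV ne simplex_compact cf.
exists c; split; first by move: cA; rewrite inE.
by move=> x' sx'; apply: cmax; rewrite inE.
Qed.

Lemma ar (a b p q r P : R) : 0 < P -> r <= 2^-1 * p + 2^-1 * q - P ->
  2^-1 * a + 2^-1 * b - r <= a - p -> b - q <= a - p -> a - p <= b - q -> False.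
Proof. move=> *; lra. Qed.

Lemma argmax_unique (h : 'rV[R]_n -> R) y x1 x2 : penalty h ->
  is_argmax h y x1 -> is_argmax h y x2 -> x1 = x2.
Proof.
move=> [_ [_ [K [N [K0 [[N0 _] sc]]]]]] [s1 m1] [s2 m2].
case: (eqVneq x1 x2) => // ne.
have hN : N (x1 - x2) != 0.
  by apply/eqP => /N0 /eqP; rewrite subr_eq0 (negbTE ne).
have t01 : 0 <= (2^-1 : R) <= 1 by apply/andP; split; lra.
have sm := @simplex_conv x1 x2 _ s1 s2 t01.
have hc := sc _ _ s1 s2 _ t01.
have mm := m1 _ sm.
have e12 := m1 _ s2.
have e21 := m2 _ s1.
have t1 : 1 - 2^-1 = (2^-1 : R) by lra.
rewrite t1 in hc mm.
rewrite innerD !innerZ in mm.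
have q0 : 0 < N (x1 - x2) ^+ 2 by rewrite exprn_even_gt0 // hN orbT.
have h2 : (0:R) < 2^-1.
  by rewrite invr_gt0 ltr0n.
have P0 : 0 < 2^-1 * K * 2^-1 * 2^-1 * N (x1 - x2) ^+ 2.
  exact: (mulr_gt0 (mulr_gt0 (mulr_gt0 (mulr_gt0 h2 K0) h2) h2) q0).
move: P0 hc mm e12 e21.
set P := 2^-1 * K * 2^-1 * 2^-1 * N (x1 - x2) ^+ 2.
move=> P0 hc mm e12 e21; exfalso; exact: (@ar _ _ _ _ _ _ P0 hc mm e12 e21).
Qed.

Lemma choice_mapE (h : 'rV[R]_n -> R) y x : penalty h ->
  is_argmax h y x -> choice_map h y = x.
Proof.
move=> ph ax; apply: (argmax_unique _ _ _ _ ph _ ax).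
by apply: xgetPex; exists x.
Qed.

Lemma choice_map_argmax (h : 'rV[R]_n -> R) y : penalty h -> (0 < n)%N ->
  is_argmax h y (choice_map h y).
Proof.
move=> ph n0; apply: xgetPex; exact: (argmax_exists _ y (proj1 ph) n0).
Qed.

Lemma inner_ebasis_r b u : inner u (ebasis b) = u ord0 b.
Proof.
rewrite /inner (bigD1 b) //= big1 ?addr0; first by rewrite !mxE eqxx mulr1.
by move=> i ib; rewrite !mxE (negbTE ib) mulr0.
Qed.

Lemma sum_inner u : \sum_i u ord0 i = inner ones u.
Proof. by apply: eq_bigr => i _; rewrite !mxE mul1r. Qed.

Lemma innerB y u v : inner y (u - v) = inner y u - inner y v.
Proof. by rewrite innerD -scaleN1r innerZ mulN1r. Qed.

Lemma shiftc (a b p q c : R) : (a + c - p <= b + c - q) <-> (a - p <= b - q).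
Proof. by split => ?; lra. Qed.

Lemma ar2 (a b p q t xb : R) : 0 <= t -> 0 <= xb -> a - p <= b - q ->
  a - t * xb - p <= b - t * 0 - q.
Proof. move=> t0 x0 H; have : 0 <= t * xb by apply: mulr_ge0. lra. Qed.

Lemma ar3 (xa d D e : R) : 0 < e -> 0 <= xa -> 0 <= D -> (D + 1) / e <= d ->
  xa * d <= D -> xa <= e.
Proof.
move=> e0 x0 D0 wd H.
have we : (D + 1) / e * e = D + 1 by rewrite mulfVK // gt_eqF.
have w0 : 0 < (D + 1) / e by apply: divr_gt0 => //; lra.
move: wd we w0; set w := (D + 1) / e => wd we w0.
have h1 : xa * w <= xa * d by apply: ler_wpM2l.
rewrite leNgt; apply/negP => exa.
have : e * w < xa * w by rewrite ltr_pM2r.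
lra.
Qed.

End H.
Arguments innerD {R n}.
Arguments innerZ {R n}.
Arguments innerDl {R n}.
Arguments innerZl {R n}.
Arguments innerNl {R n}.
Arguments inner_ones {R n}.
Arguments inner_ebasis {R n}.
Arguments simplex_conv {R n}.
Arguments sum_cont {R n}.
Arguments inner_cont {R n}.
Arguments simplex_closed {R n}.
Arguments simplex_compact {R n}.
Arguments simplex_ebasis {R n}.
Arguments argmax_exists {R n}.
Arguments ar {R}.
Arguments argmax_unique {R n}.
Arguments choice_mapE {R n}.
Arguments choice_map_argmax {R n}.
Arguments inner_ebasis_r {R n}.
Arguments sum_inner {R n}.
Arguments innerB {R n}.
Arguments shiftc {R}.
Arguments ar2 {R}.
Arguments ar3 {R}.

Theorem propositionA1 (R : realType) (n : nat) (h : 'rV[R]_n -> R) :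
  penalty h ->
  (forall y y' : 'rV[R]_n, (exists c : R, y' - y = c *: ones) ->
      choice_map h y' = choice_map h y) /\
  (forall (y : 'rV[R]_n) (b : 'I_n) (t : R), 0 <= t ->
      choice_map h y ord0 b = 0 ->
      choice_map h (y - t *: ebasis b) = choice_map h y) /\
  (forall (ys : nat -> 'rV[R]_n) (a b : 'I_n), b != a ->
      (fun j => ys j ord0 a - ys j ord0 b) @ \oo --> -oo ->
      (fun j => choice_map h (ys j) ord0 a) @ \oo --> 0).
Proof.
move=> ph; split; [|split].
- move=> y y' [c e].
  have -> : y' = y + c *: ones by rewrite -e addrC subrK.
  rewrite /choice_map; congr (xget 0 _); apply/seteqP; split => x [sx m];
    split => // x' sx'; have := m x' sx';
    rewrite !innerDl !innerZl !inner_ones // !mulr1.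
    exact: (shiftc _ _ _ _ c).1.
  exact: (shiftc _ _ _ _ c).2.
- move=> y b t t0 yb.
  have n0 : (0 < n)%N := leq_ltn_trans (leq0n _) (ltn_ord b).
  have [sx m] := choice_map_argmax h y ph n0.
  apply: choice_mapE => //; split => // x' sx'.
  rewrite !innerDl !innerNl !innerZl !inner_ebasis yb.
  apply: ar2 => //; first by case: sx' => p _; apply: p.
  exact: m.
- move=> ys a b ba H.
  have n0 : (0 < n)%N := leq_ltn_trans (leq0n _) (ltn_ord a).
  have ch := proj1 ph.
  have ne : (@simplex R n) !=set0 by exists (ebasis a); exact: simplex_ebasis.
  have [cM cMA hM] := EVT_max_rV ne simplex_compact ch.
  have [cm cmA hm] := EVT_min_rV ne simplex_compact ch.
  have D0 : 0 <= h cM - h cm by rewrite subr_ge0; apply: hM.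
  apply/cvgr0Pnorm_le => e e0.
  have Hj := cvgrNy_le H (- ((h cM - h cm + 1) / e)).
  near=> j.
  have hj : ys j ord0 a - ys j ord0 b <= - ((h cM - h cm + 1) / e) by near: j; exact: Hj.
  have [sx m] := choice_map_argmax h (ys j) ph n0.
  move: sx m; set x := choice_map h (ys j) => sx m.
  have xa0 : 0 <= x ord0 a := sx.1 a.
  rewrite ger0_norm //.
  pose x' := x + x ord0 a *: (ebasis b - ebasis a).
  have sx' : simplex x'.
    split.
    + move=> i; rewrite !mxE.
      case: (eqVneq i a) => [->|ia].
        by rewrite eq_sym (negbTE ba) /= mulr0n mulr1n sub0r mulrN1 subrr.
      rewrite mulr0n subr0.
      by apply: addr_ge0; [exact: sx.1 | apply: mulr_ge0 => //; exact: ler0n].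
    + rewrite sum_inner innerD innerZ innerB -!sum_inner sx.2 (simplex_ebasis b).2.
      by rewrite (simplex_ebasis a).2 subrr mulr0 addr0.
  have := m x' sx'.
  rewrite /x' innerD innerZ innerB !inner_ebasis_r => opt.
  have h1 : h (x + x ord0 a *: (ebasis b - ebasis a)) <= h cM.
    by apply: hM; rewrite inE.
  have h2 : h cm <= h x by apply: hm; rewrite inE.
  apply: (ar3 _ (ys j ord0 b - ys j ord0 a) (h cM - h cm)) => //.
    move: hj; clear; move=> hj; lra.
  move: opt h1 h2; clear; move=> opt h1 h2; lra.
Unshelve. all: end_near.
Qed.
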